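(* Let $g(x)=\frac1\nu\int_{1-\nu}^1\Phi\big(\mu(x,u\,\mathcal{C}'/R)\big)\,du$ for $x\in[0,1]$. Then $g$ is differentiable (piecewise) with $$g'(x)=\frac{R}{\mathcal{C}'}\int_{z_x^{low}}^{z_x^{max}}\big(1+\delta_a+\delta_z\big)^2\phi(z)\,dz,$$ where $z_x^{low}=\mu(x,(1-\nu)\mathcal{C}'/R)$, $z_x^{max}=\mu(x,\mathcal{C}'/R)$, $\delta_a=a/\sqrt{2\log M}$ and $\delta_z=z/\sqrt{2\log M}$. Furthermore, if $$R=\frac{\mathcal{C}'}{(1+\delta_a)^2(1+r/\log M)}\quad\text{with } r\ge r_0:=\frac{1}{2(1+\delta_a)^2},$$ then $g(x)-x$ is a decreasing function of $x$ on $[0,1]$.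
   Context: Fix an integer $M\ge2$, $snr>0$, $\nu=snr/(1+snr)$, constants $a\ge0$, $\mathcal{C}'>0$, $R>0$. $\Phi,\phi$ denote the standard normal distribution function and density. For $x\in[0,1]$ and $u>0$, $\mu(x,u)=\big(\sqrt{u/(1-x\nu)}-1\big)\sqrt{2\log M}-a$ (natural logarithm). *)

(* Defs.v *)
From Stdlib Require Import Reals Lra ClassicalEpsilon.
Open Scope R_scope.

(* Oriented Riemann integral of f from a to b (Stdlib RiemannInt);
   well defined whenever f is Riemann integrable (RiemannInt is proof
   irrelevant), and an arbitrary value otherwise. *)
Definition Rint (f : R -> R) (a b : R) : R :=
  epsilon (inhabits 0)
    (fun v => exists pr : Riemann_integrable f a b, RiemannInt pr = v).

Definition phi (z : R) : R := exp (- (z * z) / 2) / sqrt (2 * PI).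

Definition Phi (t : R) : R :=
  epsilon (inhabits 0)
    (fun l => Un_cv (fun n => Rint phi (- INR n) t) l).

Definition nu (snr : R) : R := snr / (1 + snr).

Definition mu (M : nat) (snr a : R) (x u : R) : R :=
  (sqrt (u / (1 - x * nu snr)) - 1) * sqrt (2 * ln (INR M)) - a.

Definition gfun (M : nat) (snr a C' Rt : R) (x : R) : R :=
  / nu snr * Rint (fun u => Phi (mu M snr a x (u * C' / Rt))) (1 - nu snr) 1.

(* Main.v *)
Require Import Defs.
From Stdlib Require Import Reals Lra ClassicalEpsilon FunctionalExtensionality.
From Coquelicot Require Import Coquelicot.
Open Scope R_scope.
Ltac req := match goal with |- @eq _ ?a ?b => change (@eq R a b) end.

Lemma Rint_RInt f a b : ex_RInt f a b -> Rint f a b = RInt f a b.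
Proof.
  intros H. unfold Rint.
  destruct (epsilon_spec (inhabits 0) (fun v => exists pr : Riemann_integrable f a b, RiemannInt pr = v)
     (ex_intro _ _ (ex_intro _ (ex_RInt_Reals_0 _ _ _ H) eq_refl))) as [pr Hpr].
  rewrite <- Hpr. symmetry. apply RInt_Reals.
Qed.

Definition ge (x:R) := exp (-(x*x)/2).

Lemma ge_cont x : continuous ge x.
Proof. apply (ex_derive_continuous (V:=R_NormedModule) ge). unfold ge. auto_derive. auto. Qed.

Lemma ge_RInt a b : ex_RInt ge a b.
Proof. apply (ex_RInt_continuous (V:=R_CompleteNormedModule)). intros; apply ge_cont. Qed.

Definition hh t x := exp (-(t*t)*(1+x*x)/2) / (1+x*x).

Lemma hh_der t x : is_derive (fun z => hh z x) t (- t * exp (-(t*t)*(1+x*x)/2)).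
Proof.
  unfold hh. auto_derive.
  - assert (0 < 1 + x*x) by nra. lra.
  - unfold Rdiv. field. nra.
Qed.

Lemma K2_der t : is_derive (fun t => RInt (fun x => hh t x) 0 1) t
   (- ge t * RInt ge 0 t).
Proof.
  assert (E: RInt (fun x => Derive (fun u => hh u x) t) 0 1 = - ge t * RInt ge 0 t).
  { rewrite (RInt_ext _ (fun x => scal (- ge t) (scal t (ge (t*x+0))))).
    2:{ intros x _. transitivity (- t * exp (-(t*t)*(1+x*x)/2)).
        { apply is_derive_unique, hh_der. }
        unfold ge, scal; simpl; unfold mult; simpl.
        replace (-(t*t)*(1+x*x)/2) with (-(t*t)/2 + -((t*x+0)*(t*x+0))/2) by field.
        rewrite exp_plus. ring. }
    rewrite (RInt_scal (V:=R_CompleteNormedModule)).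
    2:{ apply (ex_RInt_continuous (V:=R_CompleteNormedModule)). intros z _.
        apply (ex_derive_continuous (V:=R_NormedModule)). unfold ge, scal; simpl; unfold mult; simpl. auto_derive. auto. }
    rewrite (RInt_comp_lin (V:=R_CompleteNormedModule)). 
    2: apply ge_RInt.
    rewrite Rmult_0_r, Rplus_0_r, Rmult_1_r, Rplus_0_r. reflexivity. }
  rewrite <- E.
  apply is_derive_RInt_param.
  - apply filter_forall. intros y z _. eexists. apply hh_der.
  - intros z _. 
    apply continuity_2d_pt_ext with (f := fun u v => - u * exp (-(u*u)*(1+v*v)/2)).
    { intros u v. symmetry. apply is_derive_unique. apply hh_der. }
    apply continuity_2d_pt_mult.
    + apply continuity_2d_pt_opp. apply continuity_2d_pt_id1.
    + apply continuity_1d_2d_pt_comp.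
      * apply derivable_continuous_pt. apply derivable_pt_exp.
      * unfold Rdiv. apply continuity_2d_pt_mult. 2: apply continuity_2d_pt_const.
        apply continuity_2d_pt_mult.
        -- apply continuity_2d_pt_opp. apply continuity_2d_pt_mult; apply continuity_2d_pt_id1.
        -- apply continuity_2d_pt_plus. apply continuity_2d_pt_const.
           apply continuity_2d_pt_mult; apply continuity_2d_pt_id2.
  - apply filter_forall. intros y.
    apply (ex_RInt_continuous (V:=R_CompleteNormedModule)). intros z _.
    apply (ex_derive_continuous (V:=R_NormedModule)). unfold hh. auto_derive. nra.
Qed.

Lemma I_der t : is_derive (fun t => RInt ge 0 t) t (ge t).
Proof.
  apply (is_derive_RInt (V:=R_CompleteNormedModule) ge (fun t => RInt ge 0 t) 0 t).
  - apply filter_forall. intros y. apply RInt_correct, ge_RInt.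
  - apply ge_cont.
Qed.

Definition KK t := (RInt ge 0 t)^2 + 2 * RInt (fun x => hh t x) 0 1.

Lemma KK_der t : is_derive KK t 0.
Proof.
  assert (H := is_derive_plus (K:=R_AbsRing) (V:=R_NormedModule) _ _ t _ _
     (is_derive_pow _ 2 t _ (I_der t)) (is_derive_scal _ t 2 _ (K2_der t))).
  assert (E : plus (INR 2 * ge t * RInt ge 0 t ^ Init.Nat.pred 2) (2 * (- ge t * RInt ge 0 t)) = 0).
  { change (INR 2 * ge t * RInt ge 0 t ^ Init.Nat.pred 2 + (2 * (- ge t * RInt ge 0 t)) = 0).
    replace (INR 2) with 2 by (simpl; ring). simpl (Init.Nat.pred 2). ring. }
  rewrite <- E. exact H.
Qed.

Lemma KK_const T : KK T = KK 0.
Proof.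
  assert (H := is_RInt_derive (V:=R_CompleteNormedModule) KK (fun _ => 0) 0 T).
  assert (H' := is_RInt_const (V:=R_NormedModule) 0 T 0).
  assert (E := is_RInt_unique _ _ _ _ (H (fun x _ => KK_der x) (fun x _ => continuous_const _ _))).
  assert (E' := is_RInt_unique (V:=R_CompleteNormedModule) _ _ _ _ H').
  assert (E2 : minus (KK T) (KK 0) = scal (T-0) 0) by (etransitivity; [symmetry; exact E| exact E']).
  change (KK T - KK 0 = (T-0)*0) in E2. lra.
Qed.

Lemma KK0 : KK 0 = PI / 2.
Proof.
  unfold KK.
  assert (Z : RInt ge 0 0 = 0) by exact (RInt_point (V:=R_CompleteNormedModule) 0 ge).
  rewrite Z.
  rewrite (RInt_ext (V:=R_CompleteNormedModule) _ (fun x => / (1 + x^2))).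
  2:{ intros x _. unfold hh. replace (- (0*0)*(1+x*x)/2) with 0 by (unfold Rdiv; ring). rewrite exp_0. 
      change (@eq R (1/(1+x*x)) (/(1+x^2))). field. nra. }
  assert (H := is_RInt_derive (V:=R_CompleteNormedModule) atan (fun x => / (1 + x^2)) 0 1).
  assert (C : forall x, Rmin 0 1 <= x <= Rmax 0 1 -> continuous (fun x0 : R => / (1 + x0 ^ 2)) x).
  { intros x _. apply (ex_derive_continuous (V:=R_NormedModule)). auto_derive. nra. }
  rewrite (is_RInt_unique _ _ _ _ (H (fun x _ => proj2 (is_derive_Reals _ _ _) (derivable_pt_lim_atan x)) C)).
  change (0^2 + 2 * (atan 1 - atan 0) = PI/2).
  rewrite atan_1, atan_0. lra.
Qed.

Lemma IRge_bound T : (RInt ge 0 T)^2 <= PI / 2.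
Proof.
  rewrite <- KK0, <- (KK_const T). unfold KK.
  assert (0 <= RInt (fun x => hh T x) 0 1).
  { apply RInt_ge_0. lra.
    apply (ex_RInt_continuous (V:=R_CompleteNormedModule)). intros z _.
    apply (ex_derive_continuous (V:=R_NormedModule)). unfold hh. auto_derive. nra.
    intros x _. unfold hh. apply Rle_mult_inv_pos. apply Rlt_le, exp_pos. nra. }
  lra.
Qed.


Lemma phi_der z : is_derive phi z (- z * phi z).
Proof. unfold phi. auto_derive. auto. req. unfold Rdiv. field. apply Rgt_not_eq, sqrt_lt_R0. generalize PI_RGT_0; lra. Qed.

Lemma phi_cont z : continuous phi z.
Proof. apply (ex_derive_continuous (V:=R_NormedModule)). eexists. apply phi_der. Qed.

Lemma phi_RInt a b : ex_RInt phi a b.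
Proof. apply (ex_RInt_continuous (V:=R_CompleteNormedModule)). intros; apply phi_cont. Qed.

Lemma phi_pos z : 0 < phi z.
Proof. unfold phi. apply Rdiv_lt_0_compat. apply exp_pos. apply sqrt_lt_R0. generalize PI_RGT_0; lra. Qed.

Lemma phi_sym z : phi (- z) = phi z.
Proof. unfold phi. replace (- z * - z) with (z*z) by ring. reflexivity. Qed.

Definition P t := RInt phi 0 t.

Lemma P_sq t : (P t)^2 <= 1/4.
Proof.
  unfold P.
  rewrite (RInt_ext (V:=R_CompleteNormedModule) _ (fun z => scal (/ sqrt (2*PI)) (ge z))).
  2:{ intros x _. change (phi x = / sqrt (2*PI) * ge x). unfold phi, ge, Rdiv. ring. }
  rewrite (RInt_scal (V:=R_CompleteNormedModule)). 2: apply ge_RInt.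
  change ((/ sqrt (2*PI) * RInt ge 0 t)^2 <= 1/4).
  assert (H := IRge_bound t). assert (HP := PI_RGT_0).
  assert (S : sqrt (2*PI) * sqrt (2*PI) = 2*PI) by (apply sqrt_sqrt; lra).
  assert (S0 : 0 < sqrt (2*PI)) by (apply sqrt_lt_R0; lra).
  set (s := sqrt (2*PI)) in *. set (I := RInt ge 0 t) in *.
  replace ((/ s * I)^2) with (I^2 / (2*PI)).
  2:{ rewrite <- S. field. lra. }
  apply Rle_trans with ((PI/2)/(2*PI)).
  - unfold Rdiv. apply Rmult_le_compat_r. apply Rlt_le, Rinv_0_lt_compat; lra. lra.
  - right. field. lra.
Qed.

Lemma P_le t : P t <= 1/2.
Proof. assert (H := P_sq t). nra. Qed.

Lemma P_der t : is_derive P t (phi t).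
Proof.
  apply (is_derive_RInt (V:=R_CompleteNormedModule) phi P 0 t).
  - apply filter_forall. intros y. apply RInt_correct, phi_RInt.
  - apply phi_cont.
Qed.

Lemma RInt_phi_diff a b : RInt phi a b = P b - P a.
Proof.
  unfold P. rewrite <- (RInt_Chasles (V:=R_CompleteNormedModule) phi a 0 b) by apply phi_RInt.
  rewrite <- (opp_RInt_swap (V:=R_CompleteNormedModule) phi 0 a) by apply phi_RInt.
  change (- RInt phi 0 a + RInt phi 0 b = RInt phi 0 b - RInt phi 0 a). ring.
Qed.

Definition useq n := - P (- INR n).

Lemma useq_cv : {l | Un_cv useq l}.
Proof.
  apply growing_cv.
  - intros n. unfold useq. rewrite S_INR.
    assert (H := RInt_phi_diff (-(INR n + 1)) (- INR n)).
    assert (0 <= RInt phi (-(INR n + 1)) (- INR n)).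
    { apply RInt_ge_0. lra. apply phi_RInt. intros; apply Rlt_le, phi_pos. }
    lra.
  - exists (1/2). intros x [i ->]. unfold useq. assert (H := P_sq (- INR i)). nra.
Qed.

Definition l0 := proj1_sig useq_cv.

Lemma Phi_eq t : Phi t = l0 + P t.
Proof.
  assert (Hc : Un_cv (fun n => Rint phi (- INR n) t) (l0 + P t)).
  { unfold l0. destruct useq_cv as [l Hl]. simpl.
    intros eps Heps. destruct (Hl eps Heps) as [N HN]. exists N. intros n Hn.
    rewrite Rint_RInt by apply phi_RInt. rewrite RInt_phi_diff.
    specialize (HN n Hn). unfold R_dist, useq in *.
    replace (P t - P (- INR n) - (l + P t)) with (- P (- INR n) - l) by ring. exact HN. }
  unfold Phi.
  assert (E := epsilon_spec (inhabits 0) (fun l => Un_cv (fun n => Rint phi (- INR n) t) l)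
                 (ex_intro _ _ Hc)).
  eapply UL_sequence; [exact E | exact Hc].
Qed.

Lemma Phi_der t : is_derive Phi t (phi t).
Proof.
  apply is_derive_ext with (f := fun t => l0 + P t).
  { intros; symmetry; apply Phi_eq. }
  apply (is_derive_ext_loc (fun t => plus l0 (P t))).
  { apply filter_forall. intros; reflexivity. }
  assert (H := is_derive_plus (K:=R_AbsRing) (V:=R_NormedModule) (fun _ => l0) P t 0 (phi t)
     (is_derive_const _ _) (P_der t)).
  replace (phi t) with (plus 0 (phi t)). exact H.
  change (0 + phi t = phi t). ring.
Qed.


Definition FF c L t := (c^2 + 1/L^2) * P t - phi t * (2*c/L + t/L^2).

Lemma FF_der c L t : L <> 0 -> is_derive (FF c L) t ((c + t/L)^2 * phi t).
Proof.
  intros HL.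
  assert (Hg : is_derive (fun t => 2*c/L + t/L^2) t (/L^2)).
  { auto_derive. auto. req. field. auto. }
  assert (H := is_derive_minus (K:=R_AbsRing) (V:=R_NormedModule) _ _ t _ _
     (is_derive_scal P t (c^2+1/L^2) _ (P_der t))
     (is_derive_mult (K:=R_AbsRing) phi _ t _ _ (phi_der t) Hg Rmult_comm)).
  replace ((c + t/L)^2 * phi t) with
    (minus ((c ^ 2 + 1 / L ^ 2) * phi t)
       (plus (mult (- t * phi t) (2 * c / L + t / L ^ 2)) (mult (phi t) (/ L ^ 2)))).
  exact H.
  change ((c ^ 2 + 1 / L ^ 2) * phi t - ((- t * phi t) * (2 * c / L + t / L ^ 2) + (phi t) * (/ L ^ 2))
     = (c + t/L)^2 * phi t).
  field. auto.
Qed.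

Lemma J_eq c L a b : L <> 0 ->
  RInt (fun z => (c + z/L)^2 * phi z) a b = FF c L b - FF c L a.
Proof.
  intros HL.
  assert (H := is_RInt_derive (V:=R_CompleteNormedModule) (FF c L) (fun z => (c + z/L)^2 * phi z) a b
     (fun x _ => FF_der c L x HL)).
  assert (C : forall x, Rmin a b <= x <= Rmax a b -> continuous (fun z => (c + z/L)^2 * phi z) x).
  { intros x _. apply (ex_derive_continuous (V:=R_NormedModule)).
    apply (ex_derive_mult (fun z => (c + z/L)^2) phi).
    auto_derive. auto. eexists; apply phi_der. }
  exact (is_RInt_unique _ _ _ _ (H C)).
Qed.

Lemma J_ex c L a b : ex_RInt (fun z => (c + z/L)^2 * phi z) a b.
Proof.
  apply (ex_RInt_continuous (V:=R_CompleteNormedModule)).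
  intros x _. apply (ex_derive_continuous (V:=R_NormedModule)).
  apply (ex_derive_mult (fun z => (c + z/L)^2) phi).
  auto_derive. auto. eexists; apply phi_der.
Qed.

Lemma J_ge0 c L a b : a <= b -> 0 <= RInt (fun z => (c + z/L)^2 * phi z) a b.
Proof.
  intros H. apply RInt_ge_0; auto. apply J_ex.
  intros x _. apply Rmult_le_pos. apply pow2_ge_0. apply Rlt_le, phi_pos.
Qed.

Lemma J_lt c L a b : L <> 0 -> RInt (fun z => (c + z/L)^2 * phi z) a b < c^2 + 1/L^2.
Proof.
  intros HL.
  set (n := Rabs a + Rabs b + 1).
  assert (Ha : -n <= a) by (unfold n; generalize (Rle_abs (-a)) (Rabs_pos b); rewrite Rabs_Ropp; lra).
  assert (Hb : b <= n) by (unfold n; generalize (Rle_abs b) (Rabs_pos a); lra).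
  assert (Hn : 0 < n) by (unfold n; generalize (Rabs_pos a) (Rabs_pos b); lra).
  assert (H1 := J_ge0 c L b n Hb). assert (H2 := J_ge0 c L (-n) a Ha).
  rewrite J_eq in H1, H2 |- * by auto.
  assert (P1 := P_le n). assert (P2 := P_sq (-n)).
  assert (Q : P (-n) >= -1/2) by nra.
  assert (phn := phi_pos n). assert (phs := phi_sym n).
  assert (L2 : 0 < L^2) by (apply pow2_gt_0; auto).
  assert (FFn : FF c L n - FF c L (-n) = (c^2 + 1/L^2) * (P n - P (-n)) - 2 * n * phi n / L^2).
  { unfold FF. rewrite phs. field. auto. }
  assert (K : 0 < 2 * n * phi n / L^2).
  { apply Rdiv_lt_0_compat; auto. nra. }
  assert (S : 0 <= c^2 + 1/L^2).
  { assert (0 <= 1/L^2) by (apply Rlt_le, Rdiv_lt_0_compat; lra). nra. }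
  assert ((c^2 + 1/L^2) * (P n - P (-n)) <= c^2 + 1/L^2).
  { rewrite <- (Rmult_1_r (c^2 + 1/L^2)) at 2. apply Rmult_le_compat_l; auto. lra. }
  lra.
Qed.


Lemma gen_der c L (Z A Bq : R -> R) w dZ dA dB :
  L <> 0 ->
  is_derive Z w dZ -> is_derive A w dA -> is_derive Bq w dB ->
  Bq w * (c + Z w / L)^2 = A w ->
  is_derive (fun w => Phi (Z w) * A w - Bq w * FF c L (Z w)) w (Phi (Z w) * dA - dB * FF c L (Z w)).
Proof.
  intros HL HZ HA HB E.
  assert (H1 := is_derive_comp (K:=R_AbsRing) (V:=R_NormedModule) Phi Z w _ _ (Phi_der (Z w)) HZ).
  assert (H2 := is_derive_comp (K:=R_AbsRing) (V:=R_NormedModule) (FF c L) Z w _ _ (FF_der c L (Z w) HL) HZ).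
  assert (H := is_derive_minus (K:=R_AbsRing) (V:=R_NormedModule) _ _ w _ _
     (is_derive_mult (K:=R_AbsRing) _ A w _ _ H1 HA Rmult_comm)
     (is_derive_mult (K:=R_AbsRing) Bq _ w _ _ HB H2 Rmult_comm)).
  replace (Phi (Z w) * dA - dB * FF c L (Z w)) with
    (minus (plus (mult (scal dZ (phi (Z w))) (A w)) (mult (Phi (Z w)) dA))
           (plus (mult dB (FF c L (Z w))) (mult (Bq w) (scal dZ ((c + Z w / L) ^ 2 * phi (Z w)))))).
  exact H.
  change ((dZ * phi (Z w)) * A w + Phi (Z w) * dA - (dB * FF c L (Z w) + Bq w * (dZ * ((c + Z w / L) ^ 2 * phi (Z w))))
     = Phi (Z w) * dA - dB * FF c L (Z w)).
  rewrite <- E. ring.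
Qed.

Section Main.
Variables (M : nat) (snr a C' Rt : R).
Hypothesis hM : (2 <= M)%nat.
Hypothesis hsnr : 0 < snr.
Hypothesis hC : 0 < C'.
Hypothesis hR : 0 < Rt.
Hypothesis ha : 0 <= a.

Let L := sqrt (2 * ln (INR M)).
Let c := 1 + a / L.
Let nv := nu snr.

Lemma lnM_pos : 0 < ln (INR M).
Proof.
  rewrite <- ln_1. apply ln_increasing. lra.
  apply le_INR in hM. simpl in hM. lra.
Qed.

Lemma L_pos : 0 < L.
Proof. unfold L. apply sqrt_lt_R0. generalize lnM_pos; lra. Qed.

Lemma L_sq : L^2 = 2 * ln (INR M).
Proof. unfold L. apply pow2_sqrt. generalize lnM_pos; lra. Qed.

Lemma nv_bounds : 0 < nv < 1.
Proof. unfold nv, nu. split. apply Rdiv_lt_0_compat; lra.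
  apply (Rmult_lt_reg_r (1+snr)). lra. unfold Rdiv. rewrite Rmult_assoc, Rinv_l by lra. lra. Qed.

Lemma sq_id x m : 0 < 1 - x * nv -> 0 <= m ->
  (Rt*(1-x*nv)/C') * (c + mu M snr a x m / L)^2 = Rt*m/C'.
Proof.
  intros Hq Hm. assert (HL := L_pos). unfold mu, c. fold nv. fold L.
  replace (1 + a / L + ((sqrt (m / (1 - x * nv)) - 1) * L - a) / L) with (sqrt (m / (1 - x * nv)))
    by (field; lra).
  rewrite pow2_sqrt. field. split; lra.
  apply Rle_mult_inv_pos; lra.
Qed.

Lemma Zder_x x m : 0 < 1 - x * nv -> 0 < m -> ex_derive (fun x => mu M snr a x m) x.
Proof.
  intros Hq Hm. unfold mu. fold nv. auto_derive. split. lra. split; auto.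
  apply Rdiv_lt_0_compat; lra.
Qed.

Lemma Zder_t x t : 0 < 1 - x * nv -> 0 < t -> ex_derive (fun t => mu M snr a x (t*C'/Rt)) t.
Proof.
  intros Hq Ht. unfold mu. fold nv. auto_derive. repeat split; try lra.
  apply Rdiv_lt_0_compat; try lra. apply Rdiv_lt_0_compat; nra.
Qed.

Definition Hf m x := Phi (mu M snr a x m) * (Rt*m/C') - (Rt*(1-x*nv)/C') * FF c L (mu M snr a x m).

Lemma Hder m x : 0 < 1 - x * nv -> 0 < m ->
  is_derive (Hf m) x (Rt*nv/C' * FF c L (mu M snr a x m)).
Proof.
  intros Hq Hm. assert (HL := L_pos).
  assert (H := gen_der c L (fun x => mu M snr a x m) (fun _ => Rt*m/C') (fun x => Rt*(1-x*nv)/C') x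
     _ 0 (- (Rt*nv/C')) ltac:(lra) (Derive_correct _ _ (Zder_x x m Hq Hm))
     ltac:(auto_derive; auto; req; ring) ltac:(auto_derive; auto; req; field; lra)
     (sq_id x m Hq ltac:(lra))).
  replace (Rt*nv/C' * FF c L (mu M snr a x m)) with
    (Phi (mu M snr a x m) * 0 - - (Rt * nv / C') * FF c L (mu M snr a x m)) by ring.
  exact H.
Qed.

Lemma Bder x t : 0 < 1 - x * nv -> 0 < t ->
  is_derive (fun t => Hf (t*C'/Rt) x) t (Phi (mu M snr a x (t*C'/Rt))).
Proof.
  intros Hq Ht. assert (HL := L_pos).
  assert (H := gen_der c L (fun t => mu M snr a x (t*C'/Rt)) (fun t => Rt*(t*C'/Rt)/C') (fun _ => Rt*(1-x*nv)/C') t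
     _ 1 0 ltac:(lra) (Derive_correct _ _ (Zder_t x t Hq Ht))
     ltac:(auto_derive; auto; req; field; lra) ltac:(auto_derive; auto; req; ring)
     (sq_id x (t*C'/Rt) Hq ltac:(apply Rlt_le, Rdiv_lt_0_compat; nra))).
  replace (Phi (mu M snr a x (t*C'/Rt))) with
    (Phi (mu M snr a x (t*C'/Rt)) * 1 - 0 * FF c L (mu M snr a x (t*C'/Rt))) by ring.
  exact H.
Qed.

Lemma g_closed x : 0 < 1 - x * nv ->
  gfun M snr a C' Rt x = / nv * (Hf (1*C'/Rt) x - Hf ((1-nv)*C'/Rt) x).
Proof.
  intros Hq. assert (Hn := nv_bounds).
  assert (Hm : 0 < Rmin (1-nv) 1) by (apply Rmin_glb_lt; lra).
  assert (C : forall u, Rmin (1-nv) 1 <= u <= Rmax (1-nv) 1 ->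
     continuous (fun u => Phi (mu M snr a x (u*C'/Rt))) u).
  { intros u Hu. apply (ex_derive_continuous (V:=R_NormedModule)).
    eexists. apply (is_derive_comp (K:=R_AbsRing) (V:=R_NormedModule) Phi).
    apply Phi_der. apply Derive_correct. apply Zder_t; lra. }
  assert (IR := is_RInt_derive (V:=R_CompleteNormedModule) (fun t => Hf (t*C'/Rt) x)
     (fun u => Phi (mu M snr a x (u*C'/Rt))) (1-nv) 1
     (fun t Ht => Bder x t Hq ltac:(lra)) C).
  unfold gfun. fold nv.
  rewrite Rint_RInt by (eexists; exact IR).
  rewrite (is_RInt_unique _ _ _ _ IR). reflexivity.
Qed.

Definition gd x := Rt/C' * (FF c L (mu M snr a x (C'/Rt)) - FF c L (mu M snr a x ((1-nv)*C'/Rt))).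

Lemma g_der x : 0 < 1 - x * nv -> is_derive (gfun M snr a C' Rt) x (gd x).
Proof.
  intros Hq. assert (Hn := nv_bounds).
  apply is_derive_ext_loc with (f := fun y => / nv * (Hf (1*C'/Rt) y - Hf ((1-nv)*C'/Rt) y)).
  { apply (locally_interval _ x m_infty (1/nv)). exact I.
    simpl. apply (Rmult_lt_reg_r nv). lra. unfold Rdiv. rewrite Rmult_assoc, Rinv_l; lra.
    intros y _ Hy. simpl in Hy. symmetry. apply g_closed.
    assert (y * nv < 1/nv * nv) by (apply Rmult_lt_compat_r; lra).
    unfold Rdiv in H. rewrite Rmult_assoc, Rinv_l in H; lra. }
  assert (H1 : 0 < 1*C'/Rt) by (apply Rdiv_lt_0_compat; lra).
  assert (H2 : 0 < (1-nv)*C'/Rt) by (apply Rdiv_lt_0_compat; nra).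
  assert (H := is_derive_scal _ x (/nv) _
     (is_derive_minus (K:=R_AbsRing) (V:=R_NormedModule) _ _ x _ _ (Hder _ x Hq H1) (Hder _ x Hq H2))).
  replace (gd x) with (/ nv * minus (Rt * nv / C' * FF c L (mu M snr a x (1 * C' / Rt)))
          (Rt * nv / C' * FF c L (mu M snr a x ((1 - nv) * C' / Rt)))).
  exact H.
  change (/ nv * (Rt * nv / C' * FF c L (mu M snr a x (1 * C' / Rt)) -
          Rt * nv / C' * FF c L (mu M snr a x ((1 - nv) * C' / Rt))) = gd x).
  unfold gd. rewrite Rmult_1_l. field. lra.
Qed.

Lemma gd_eq x : gd x = Rt / C' * Rint (fun z => (1 + a/L + z / L) ^ 2 * phi z)
      (mu M snr a x ((1 - nu snr) * C' / Rt)) (mu M snr a x (C' / Rt)).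
Proof.
  assert (HL := L_pos).
  unfold gd. rewrite Rint_RInt by apply J_ex. rewrite J_eq by lra. reflexivity.
Qed.

Lemma part1 x : 0 <= x <= 1 -> derivable_pt_lim (gfun M snr a C' Rt) x
   (Rt / C' * Rint (fun z => (1 + a/L + z / L) ^ 2 * phi z)
      (mu M snr a x ((1 - nu snr) * C' / Rt)) (mu M snr a x (C' / Rt))).
Proof.
  intros Hx. assert (Hn := nv_bounds). rewrite <- gd_eq. apply is_derive_Reals. apply g_der. nra.
Qed.

Lemma gd_lt r : 1 / (2 * (1 + a/L) ^ 2) <= r ->
  Rt = C' / ((1 + a/L) ^ 2 * (1 + r / ln (INR M))) -> forall z, gd z < 1.
Proof.
  intros Hr HRt z. assert (HL := L_pos). assert (Hl := lnM_pos). assert (L2 := L_sq).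
  assert (Ha : 0 <= a/L) by (apply Rle_mult_inv_pos; lra).
  fold c in Hr, HRt.
  assert (Hc : 1 <= c) by (unfold c; lra).
  assert (Hc2 : 1 <= c^2) by nra.
  assert (Hr2 : 1/2 <= c^2 * r).
  { apply Rmult_le_compat_l with (r := c^2) in Hr; [|lra].
    replace (c^2 * (1 / (2 * c^2))) with (1/2) in Hr by (field; lra). exact Hr. }
  assert (Hr0 : 0 < r) by nra.
  set (D := c^2 * (1 + r / ln (INR M))) in *.
  assert (HD : c^2 + 1/L^2 <= D).
  { unfold D. rewrite L2. 
    assert (c^2 * r / ln (INR M) >= 1/2 / ln (INR M)).
    { unfold Rdiv. apply Rle_ge, Rmult_le_compat_r. apply Rlt_le, Rinv_0_lt_compat; lra. lra. }
    replace (c ^ 2 * (1 + r / ln (INR M))) with (c^2 + c^2 * r / ln (INR M)) by (field; lra).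
    replace (1 / (2 * ln (INR M))) with (1/2/ln (INR M)) by (field; lra). lra. }
  assert (HD0 : 0 < D) by (unfold D; apply Rmult_lt_0_compat; [lra|]; 
     assert (0 < r / ln (INR M)) by (apply Rdiv_lt_0_compat; lra); lra).
  assert (RC : Rt / C' = / D) by (rewrite HRt; field; lra).
  unfold gd. rewrite RC.
  rewrite <- J_eq by lra.
  assert (J := J_lt c L (mu M snr a z ((1 - nv) * C' / Rt)) (mu M snr a z (C' / Rt)) ltac:(lra)).
  apply (Rmult_lt_reg_l D). lra. rewrite <- Rmult_assoc, Rinv_r by lra. lra.
Qed.

Lemma part2 r : 1 / (2 * (1 + a/L) ^ 2) <= r ->
  Rt = C' / ((1 + a/L) ^ 2 * (1 + r / ln (INR M))) ->
  forall x y : R, 0 <= x -> x < y -> y <= 1 ->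
  gfun M snr a C' Rt y - y < gfun M snr a C' Rt x - x.
Proof.
  intros Hr HRt x y Hx Hxy Hy. assert (Hn := nv_bounds).
  destruct (MVT_cor2 (fun x => gfun M snr a C' Rt x - x) (fun x => gd x - 1) x y Hxy) as [xi [E Hxi]].
  { intros z Hz. apply is_derive_Reals.
    apply (is_derive_minus (K:=R_AbsRing) (V:=R_NormedModule) (gfun M snr a C' Rt) (fun x => x)).
    apply g_der. nra. apply (is_derive_id (K:=R_AbsRing)). }
  assert (G := gd_lt r Hr HRt xi).
  assert ((gd xi - 1) * (y - x) < 0) by (apply Rmult_neg_pos; lra).
  lra.
Qed.
End Main.


Theorem lemma6 (M : nat) (snr a C' Rt : R)
  (hM : (2 <= M)%nat) (hsnr : 0 < snr) (ha : 0 <= a) (hC : 0 < C') (hR : 0 < Rt) :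
  let L := sqrt (2 * ln (INR M)) in
  let da := a / L in
  (forall x : R, 0 <= x <= 1 ->
     derivable_pt_lim (gfun M snr a C' Rt) x
       (Rt / C' *
        Rint (fun z => (1 + da + z / L) ^ 2 * phi z)
             (mu M snr a x ((1 - nu snr) * C' / Rt))
             (mu M snr a x (C' / Rt))))
  /\
  (forall r : R,
     1 / (2 * (1 + da) ^ 2) <= r ->
     Rt = C' / ((1 + da) ^ 2 * (1 + r / ln (INR M))) ->
     forall x y : R, 0 <= x -> x < y -> y <= 1 ->
       gfun M snr a C' Rt y - y < gfun M snr a C' Rt x - x).
Proof.
  intros L da. split.
  - intros x Hx. exact (part1 M snr a C' Rt hM hsnr hC hR x Hx).
  - intros r Hr HRt. exact (part2 M snr a C' Rt hM hsnr hC hR ha r Hr HRt).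
Qed.
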